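(* Let $n\ge5$ be odd and let $\mathcal{S}_n$ be the regular $n$-gon state space. Then the maximum of $\bar P(\mathsf{M}^{(1)},\mathsf{M}^{(2)})$ over all pairs of compatible dichotomic measurements $\mathsf{M}^{(1)},\mathsf{M}^{(2)}$ on $\mathcal{S}_n$ equals $$\frac12\Big(1+\frac{1+\sec(\pi/n)}{4}\Big),$$ which is strictly larger than $\frac34$. In particular, there exist compatible dichotomic measurements on $\mathcal{S}_n$ with $\bar P(\mathsf{M}^{(1)},\mathsf{M}^{(2)})>\frac34$.
   Context: The regular $n$-gon state space $\mathcal{S}_n\subset\mathbb{R}^3$ is the convex hull of $s_j=(r_n\cos(2j\pi/n),\,r_n\sin(2j\pi/n),\,1)^T$, $j=1,\ldots,n$, with $r_n=\sqrt{\sec(\pi/n)}$. Effects are linear functionals $e$ on $\mathbb{R}^3$ with $0\le e\le1$ on $\mathcal{S}_n$; unit effect $u=(0,0,1)$; $\|f\|=\max_{s\in\mathcal{S}_n}|f(s)|$. A dichotomic measurement is a pair of effects $\mathsf{M}_+,\mathsf{M}_-$ with $\mathsf{M}_++\mathsf{M}_-=u$. Two dichotomic measurements are compatible if there exist effects $\mathsf{J}_{x,y}$, $x,y\in\{+,-\}$, with $\sum_y\mathsf{J}_{x,y}=\mathsf{M}^{(1)}_x$ and $\sum_x\mathsf{J}_{x,y}=\mathsf{M}^{(2)}_y$. $\bar P(\mathsf{M}^{(1)},\mathsf{M}^{(2)})=\frac18\sum_{x,y\in\{+,-\}}\|\mathsf{M}^{(1)}_x+\mathsf{M}^{(2)}_y\|$.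 *)

(* Defs.v *)
From HB Require Import structures.
From mathcomp Require Import all_boot all_order all_algebra.
From mathcomp Require Import all_classical all_reals.
From mathcomp Require Import reals trigo.
Set Implicit Arguments. Unset Strict Implicit. Unset Printing Implicit Defensive.
Import Order.TTheory GRing.Theory Num.Theory.
Local Open Scope ring_scope.
Local Open Scope classical_set_scope.

Section GPT.
Variable R : realType.

(* points of R^3 and linear functionals on R^3 (represented by coefficients) *)
Definition vec3 := 'rV[R]_3.
Definition ev (f x : vec3) : R := \sum_(i < 3) f 0 i * x 0 i.

Definition mk3 (a b c : R) : vec3 :=
  \row_(i < 3) (if i == 0 :> nat then a else if i == 1 :> nat then b else c).

Definition rn (n : nat) : R := Num.sqrt (1 / cos (pi / n%:R)).

(* vertices s_j, j = 1..n (j : 'I_n is used as j.+1) *)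
Definition vertex (n : nat) (j : 'I_n) : vec3 :=
  mk3 (rn n * cos (2 * (j.+1)%:R * pi / n%:R))
      (rn n * sin (2 * (j.+1)%:R * pi / n%:R)) 1.

Definition state_space (n : nat) : set vec3 :=
  [set x | exists w : 'I_n -> R, (forall j, 0 <= w j) /\ \sum_j w j = 1 /\
           x = \sum_j w j *: vertex j].

Definition unit_eff : vec3 := mk3 0 0 1.

Definition effect (n : nat) (e : vec3) : Prop :=
  forall s, state_space n s -> 0 <= ev e s <= 1.

Definition fnorm (n : nat) (f : vec3) : R :=
  sup [set `|ev f s| | s in state_space n].

(* dichotomic measurement: outcome true = "+", false = "-" *)
Definition dichotomic (n : nat) (M : bool -> vec3) : Prop :=
  (forall x, effect n (M x)) /\ M true + M false = unit_eff.

Definition compatible (n : nat) (M1 M2 : bool -> vec3) : Prop :=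
  exists J : bool -> bool -> vec3,
    (forall x y, effect n (J x y)) /\
    (forall x, \sum_(y : bool) J x y = M1 x) /\
    (forall y, \sum_(x : bool) J x y = M2 y).

Definition Pbar (n : nat) (M1 M2 : bool -> vec3) : R :=
  8^-1 * \sum_(x : bool) \sum_(y : bool) fnorm n (M1 x + M2 y).

End GPT.

(* Main.v *)
Require Import Defs.
From HB Require Import structures.
From mathcomp Require Import all_boot all_order all_algebra.
From mathcomp Require Import all_classical all_reals.
From mathcomp Require Import reals trigo.
From mathcomp Require Import ring lra zify.
Import Order.TTheory GRing.Theory Num.Theory.
Local Open Scope ring_scope.
Lemma evE {R : realType} (a b c x y z : R) :
  ev (mk3 a b c) (mk3 x y z) = a * x + b * y + c * z.
Proof. by rewrite /ev !big_ord_recr big_ord0 /= !mxE /= add0r. Qed.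

Lemma evDl {R : realType} (f g x : vec3 R) : ev (f + g) x = ev f x + ev g x.
Proof. by rewrite /ev -big_split; apply: eq_bigr => i _; rewrite mxE mulrDl. Qed.

Lemma evDr {R : realType} (f x y : vec3 R) : ev f (x + y) = ev f x + ev f y.
Proof. by rewrite /ev -big_split; apply: eq_bigr => i _; rewrite mxE mulrDr. Qed.

Lemma evZr {R : realType} (f x : vec3 R) a : ev f (a *: x) = a * ev f x.
Proof.
rewrite /ev mulr_sumr; apply: eq_bigr => i _; rewrite mxE; ring.
Qed.

Lemma evZl {R : realType} (f x : vec3 R) a : ev (a *: f) x = a * ev f x.
Proof.
rewrite /ev mulr_sumr; apply: eq_bigr => i _; rewrite mxE; ring.
Qed.

Lemma ev0r {R : realType} (f : vec3 R) : ev f 0 = 0.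
Proof. by rewrite /ev big1 // => i _; rewrite mxE mulr0. Qed.

Lemma ev0l {R : realType} (x : vec3 R) : ev 0 x = 0.
Proof. by rewrite /ev big1 // => i _; rewrite mxE mul0r. Qed.

Lemma ev_sumr {R : realType} (f : vec3 R) (I : finType) (F : I -> vec3 R) :
  ev f (\sum_i F i) = \sum_i ev f (F i).
Proof. elim/big_rec2: _ => [|i y1 y2 _ <-]; [exact: ev0r | exact: evDr]. Qed.

Lemma ev_sumbool {R : realType} (F : bool -> vec3 R) x :
  ev (\sum_(b : bool) F b) x = ev (F true) x + ev (F false) x.
Proof. by rewrite big_bool /= evDl. Qed.

Lemma ev_state {R : realType} n (f : vec3 R) w :
  ev f (\sum_(j < n) w j *: vertex R j) = \sum_(j < n) w j * ev f (vertex R j).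
Proof. by rewrite ev_sumr; apply: eq_bigr => j _; rewrite evZr. Qed.

Lemma vertex_state {R : realType} n (j : 'I_n) : state_space n (vertex R j).
Proof.
exists (fun k => if k == j then 1 else 0); split.
  by move=> k; case: ifP.
split.
  by rewrite (bigD1 j) //= eqxx big1 ?addr0 // => k /negbTE ->.
rewrite (bigD1 j) //= eqxx scale1r big1 ?addr0 // => k /negbTE ->.
by rewrite scale0r.
Qed.

Lemma state_conv {R : realType} {n} (f : vec3 R) (lo hi : R) s :
  state_space n s -> (forall j : 'I_n, lo <= ev f (vertex R j) <= hi) ->
  lo <= ev f s <= hi.
Proof.
move=> [w [w0 [w1 ->]]] H; rewrite ev_state; apply/andP; split.
  rewrite -[lo]mul1r -w1 mulr_suml; apply: ler_sum => j _.
  have /andP[h1 h2] := H j; have := w0 j; nra.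
rewrite -[hi]mul1r -w1 mulr_suml; apply: ler_sum => j _.
have /andP[h1 h2] := H j; have := w0 j; nra.
Qed.

Lemma ev_unit_vertex {R : realType} n (j : 'I_n) : ev (unit_eff R) (vertex R j) = 1.
Proof. by rewrite /unit_eff /vertex evE; ring. Qed.

Lemma ev_unit_state {R : realType} n s : state_space n s -> ev (unit_eff R) s = 1.
Proof.
move=> Hs; have /andP[h1 h2] : 1 <= ev (unit_eff R) s <= 1.
  by apply: (state_conv (unit_eff R) 1 1 s Hs) => j; rewrite ev_unit_vertex lexx.
by apply/eqP; rewrite eq_le h1 h2.
Qed.
Definition cc {R : realType} (n : nat) : R := cos (pi / n%:R).
Definition th {R : realType} (n k : nat) : R := 2 * k%:R * pi / n%:R.

Lemma cos_le_mono {R : realType} (x y : R) : 0 <= x -> x <= y -> y <= pi -> cos y <= cos x.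
Proof.
move=> x0 xy ypi; have [->|xy'] := eqVneq x y; first by [].
have lt : x < y by rewrite lt_neqAle xy' xy.
apply: ltW; rewrite ltr_cos // in_itv /=; apply/andP; split; lra.
Qed.

Lemma npos {R : realType} n : (0 < n)%N -> (0 : R) < n%:R.
Proof. by move=> h; rewrite ltr0n. Qed.

Lemma pin_bounds {R : realType} n : (5 <= n)%N ->
  0 < pi / n%:R :> R /\ (pi / n%:R) *+ 2 <= pi / 2 :> R.
Proof.
move=> h5; have n0 : (0 : R) < n%:R by rewrite ltr0n; apply: leq_trans h5.
have n5 : (5 : R) <= n%:R by rewrite (ler_nat R 5 n).
have p0 := @pi_gt0 R.
split; first by rewrite divr_gt0.
rewrite mulr2n -mulrDl ler_pdivrMr // mulrAC ler_pdivlMr //.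
nra.
Qed.

Lemma cc_pos {R : realType} n : (5 <= n)%N -> 0 < (cc n : R).
Proof.
move=> h5; have [h1 h2] := @pin_bounds R n h5.
apply: cos_gt0_pihalf; have p0 := @pi_gt0 R.
apply/andP; split; first by apply: lt_trans h1; rewrite oppr_lt0 divr_gt0.
by apply: lt_le_trans h2; rewrite mulr2n ltrDr.
Qed.
Lemma cc_lt1 {R : realType} n : (5 <= n)%N -> (cc n : R) < 1.
Proof.
move=> h5; have [h1 h2] := @pin_bounds R n h5; have p0 := @pi_gt0 R.
have n1 : (1 : R) <= n%:R by rewrite (ler_nat R 1 n); apply: leq_trans h5.
have hx : pi / n%:R <= pi :> R.
  by rewrite ler_pdivrMr ?(lt_le_trans ltr01 n1) // ler_peMr // ltW.
have : cos (pi / n%:R) < cos (0:R).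
  by rewrite ltr_cos ?in_itv /= ?lexx ?h1 ?(ltW h1) ?hx ?(ltW p0).
by rewrite cos0.
Qed.

Lemma cc_sq {R : realType} n : (5 <= n)%N -> 1 <= 2 * (cc n : R) ^+ 2.
Proof.
move=> h5; have [h1 h2] := @pin_bounds R n h5; have p0 := @pi_gt0 R.
have : 0 <= cos ((pi / n%:R) *+ 2) :> R.
  apply: cos_ge0_pihalf; apply/andP; split => //; lra.
rewrite cos_mulr2n /cc; lra.
Qed.

Lemma cc_half {R : realType} n : (5 <= n)%N -> 1 <= 2 * (cc n : R).
Proof.
move=> h5; have := @cc_sq R n h5; have := @cc_pos R n h5; have := @cc_lt1 R n h5; nra.
Qed.

Lemma cos_odd_le {R : realType} n m : (0 < n)%N -> odd m -> (m <= n)%N ->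
  cos (m%:R * pi / n%:R) <= (cc n : R).
Proof.
move=> n0 om mn; have p0 := @pi_gt0 R.
have nR : (0 : R) < n%:R by rewrite ltr0n.
have m1 : (1 <= m)%N by case: m om mn.
have m1R : (1 : R) <= m%:R by rewrite (ler_nat R 1 m).
have mnR : (m%:R : R) <= n%:R by rewrite ler_nat.
rewrite /cc; apply: cos_le_mono.
- by rewrite ltW // divr_gt0.
- rewrite -mulrA ler_pMl; [exact: m1R | by rewrite divr_gt0].
- by rewrite ler_pdivrMr // mulrC ler_pM2l.
Qed.
Lemma cos_odd_abs {R : realType} n (a b : nat) : (0 < n)%N ->
  (a <= n + b)%N -> (b <= n + a)%N -> odd (a + b) ->
  cos ((a%:R - b%:R) * pi / n%:R) <= (cc n : R).
Proof.
move=> n0 h1 h2 oab.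
case: (leqP b a) => hab.
- rewrite -natrB //.
  apply: (@cos_odd_le R n (a - b)%N n0).
    by rewrite oddB // -oddD.
  rewrite leq_subLR addnC; exact: h1.
- have hab' := ltnW hab.
  rewrite -cosN -mulNr -mulNr opprB -natrB; last exact: hab'.
  apply: (@cos_odd_le R n (b - a)%N n0).
    rewrite oddB; last exact: hab'.
    rewrite -oddD addnC; exact: oab.
  rewrite leq_subLR addnC; exact: h2.
Qed.
Lemma V1 {R : realType} n k : (0 < n)%N -> odd n -> (k <= n)%N ->
  - (cc n : R) <= cos (2 * k%:R * pi / n%:R).
Proof.
move=> n0 on kn.
have nR : (n%:R : R) != 0 by rewrite pnatr_eq0 -lt0n.
have E : 2 * k%:R * pi / n%:R = ((k.*2)%:R - n%:R) * pi / n%:R + pi :> R.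
  rewrite -muln2 natrM; field; exact: nR.
rewrite E cosDpi lerN2.
apply: (@cos_odd_abs R n (k.*2) n n0).
- rewrite -!muln2; lia.
- rewrite -!muln2; lia.
- rewrite oddD odd_double on; exact: isT.
Qed.

Lemma V2 {R : realType} n j : (0 < n)%N -> (j < n)%N ->
  cos (2 * (j.+1)%:R * pi / n%:R - pi / n%:R) <= (cc n : R).
Proof.
move=> n0 jn.
have nR : (n%:R : R) != 0 by rewrite pnatr_eq0 -lt0n.
case: (leqP (j.*2.+1) n) => h.
- have E : 2 * (j.+1)%:R * pi / n%:R - pi / n%:R =
      ((j.*2.+1)%:R - (0%N)%:R) * pi / n%:R :> R.
    rewrite -[(j.+1)%:R]natr1 -[(j.*2.+1)%:R]natr1 -muln2 natrM; field; exact: nR.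
  rewrite E; apply: (@cos_odd_abs R n (j.*2.+1) 0 n0).
  + rewrite -!muln2; lia.
  + rewrite -!muln2; lia.
  + rewrite addn0 /= odd_double; exact: isT.
- have E : 2 * (j.+1)%:R * pi / n%:R - pi / n%:R =
      ((j.*2.+1)%:R - (n.*2)%:R) * pi / n%:R + pi *+ 2 :> R.
    rewrite -[(j.+1)%:R]natr1 -[(j.*2.+1)%:R]natr1 -!muln2 !natrM; field; exact: nR.
  rewrite E cosD2pi; apply: (@cos_odd_abs R n (j.*2.+1) (n.*2) n0).
  + rewrite -!muln2; lia.
  + rewrite -!muln2; lia.
  + rewrite oddD /= !odd_double; exact: isT.
Qed.
Lemma angle_mod {R : realType} n k : (0 < n)%N -> (0 < k)%N ->
  exists a : 'I_n, cos (2 * (a.+1)%:R * pi / n%:R) = cos (2 * k%:R * pi / n%:R) :> R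
    /\ sin (2 * (a.+1)%:R * pi / n%:R) = sin (2 * k%:R * pi / n%:R) :> R.
Proof.
move=> n0 k0.
have nR : (n%:R : R) != 0 by rewrite pnatr_eq0 -lt0n.
pose a := Ordinal (ltn_pmod k.-1 n0).
exists a.
have hk : k = ((k.-1 %% n).+1 + (k.-1 %/ n) * n)%N.
  have := divn_eq k.-1 n; lia.
have E : 2 * k%:R * pi / n%:R = 2 * (a.+1)%:R * pi / n%:R + (pi *+ 2) *+ (k.-1 %/ n) :> R.
  rewrite {1}hk natrD natrM !mulr_natr /=; field; exact: nR.
rewrite E (periodicn (@cosD2pi R)) (periodicn (@sinD2pi R)); split; reflexivity.
Qed.

Definition ydom {R : realType} n : vec3 R := mk3 0 0 (1 + 1 / cc n).

Lemma mk3_dec {R : realType} (x y z : R) :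
  mk3 x y z = x *: mk3 1 0 0 + y *: mk3 0 1 0 + z *: mk3 0 0 1.
Proof.
apply/rowP => i; rewrite !mxE.
case: i => [[|[|[|i]]] hi] //=; ring.
Qed.

Lemma evE' {R : realType} (e : vec3 R) x y z :
  ev e (mk3 x y z) = ev e (mk3 1 0 0) * x + ev e (mk3 0 1 0) * y + ev e (mk3 0 0 1) * z.
Proof. by rewrite mk3_dec !evDr !evZr; ring. Qed.

Lemma rn_pos {R : realType} n : (5 <= n)%N -> 0 < rn R n.
Proof.
move=> h5; rewrite /rn sqrtr_gt0 divr_gt0 //; exact: (@cc_pos R n h5).
Qed.

Lemma rn_sq {R : realType} n : (5 <= n)%N -> rn R n ^+ 2 = 1 / cc n.
Proof.
move=> h5; rewrite /rn sqr_sqrtr // ltW // divr_gt0 //; exact: (@cc_pos R n h5).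
Qed.
Lemma dom_vertex {R : realType} n (e : vec3 R) (j : 'I_n) : (5 <= n)%N -> odd n ->
  (forall k : 'I_n, 0 <= ev e (vertex R k)) -> ev e (vertex R j) <= ev e (ydom n).
Proof.
move=> h5 on he.
have n0 : (0 < n)%N by apply: leq_trans h5.
have nR : (n%:R : R) != 0 by rewrite pnatr_eq0 -lt0n.
have c0 := @cc_pos R n h5.
set h := n./2.
have hn : n = (h.*2).+1.
  by rewrite -[in LHS](odd_double_half n) on.
have nhR : (n%:R : R) = 2 * h%:R + 1 by rewrite {1}hn -natr1 -muln2 natrM mulrC.
have nhR0 : (2 * h%:R + 1 : R) != 0 by rewrite -nhR.
have [a [ca sa]] := @angle_mod R n (j.+1 + h) n0 (ltn0Sn _).
have [b [cb sb]] := @angle_mod R n (j.+1 + h.+1) n0 (ltn0Sn _).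
pose th : R := 2 * (j.+1)%:R * pi / n%:R.
pose x : R := pi / n%:R.
have Ea : 2 * (j.+1 + h)%:R * pi / n%:R = (th - x) + pi :> R.
  rewrite /th /x natrD nhR; field; exact: nhR0.
have Eb : 2 * (j.+1 + h.+1)%:R * pi / n%:R = (th + x) + pi :> R.
  rewrite /th /x natrD -natr1 nhR; field; exact: nhR0.
pose A := ev e (mk3 1 0 0); pose B := ev e (mk3 0 1 0); pose C := ev e (mk3 0 0 1).
have Ev p q z : ev e (mk3 p q z) = A * p + B * q + C * z by rewrite evE'.
have Ha := he a; have Hb := he b.
move: Ha Hb; rewrite /vertex /ydom !Ev ca sa Ea cb sb Eb.
rewrite !cosDpi !sinDpi cosB sinB cosD sinD -/x -/th -/(cc n).
pose P := A * (rn R n * cos th) + B * (rn R n * sin th).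
move=> Ha Hb.
have H : 0 <= 2 * C - 2 * cc n * P by rewrite /P; nra.
have HP : P * cc n <= C by nra.
have : P <= C / cc n by rewrite ler_pdivlMr.
rewrite /P; lra.
Qed.
Lemma dom_state {R : realType} n (e : vec3 R) s : (5 <= n)%N -> odd n ->
  effect n e -> state_space n s -> ev e s <= ev e (ydom n).
Proof.
move=> h5 on he Hs.
have H : 0 <= ev e s <= ev e (ydom n).
  apply: (state_conv e 0 (ev e (ydom n)) s Hs) => j; apply/andP; split.
    by have /andP[] := he _ (vertex_state n j).
  apply: dom_vertex => // k.
  by have /andP[] := he _ (vertex_state n k).
by case/andP: H.
Qed.

Lemma ev_unit_ydom {R : realType} n : ev (unit_eff R) (ydom n) = 1 + 1 / cc n.
Proof. by rewrite /unit_eff /ydom evE; ring. Qed.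

Lemma fnorm_le {R : realType} n (f : vec3 R) b : (0 < n)%N ->
  (forall s, state_space n s -> `|ev f s| <= b) -> fnorm n f <= b.
Proof.
move=> n0 H; apply: ge_sup.
  exists `|ev f (vertex R (Ordinal n0))|; exists (vertex R (Ordinal n0)) => //.
  exact: vertex_state.
by move=> _ [s Hs <-]; apply: H.
Qed.

Lemma upper {R : realType} n (M1 M2 : bool -> vec3 R) : (5 <= n)%N -> odd n ->
  dichotomic n M1 -> dichotomic n M2 -> compatible n M1 M2 ->
  Pbar n M1 M2 <= 8^-1 * (5 + 1 / cc n).
Proof.
move=> h5 on [E1 U1] [E2 U2] [J [EJ [S1 S2]]].
have n0 : (0 < n)%N by apply: leq_trans h5.
have key : forall x y, fnorm n (M1 x + M2 y) <= 1 + ev (J x y) (ydom n).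
  move=> x y; apply: fnorm_le => // s Hs.
  have T : ev (J true true) s + ev (J true false) s + ev (J false true) s
           + ev (J false false) s = 1.
    have := ev_unit_state n s Hs; rewrite -U1 evDl -!S1 !ev_sumbool.
    lra.
  have D := dom_state n (J x y) s h5 on (EJ x y) Hs.
  have P e : effect n e -> 0 <= ev e s.
    by move=> He; have /andP[] := He s Hs.
  have Ptt := P _ (EJ true true); have Ptf := P _ (EJ true false).
  have Pft := P _ (EJ false true); have Pff := P _ (EJ false false).
  move: D; rewrite evDl -S1 -S2 !ev_sumbool.
  rewrite ler_norml.
  by case: x; case: y => /= D; apply/andP; split; lra.
rewrite /Pbar !big_bool /=.
have K1 := key true true; have K2 := key true false.
have K3 := key false true; have K4 := key false false.
have T : ev (J true true) (ydom n) + ev (J true false) (ydom n)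
   + ev (J false true) (ydom n) + ev (J false false) (ydom n) = 1 + 1 / cc n.
  rewrite -ev_unit_ydom -U1 evDl -!S1 !ev_sumbool; ring.
have h8 : (0 : R) <= 8^-1 by rewrite invr_ge0.
rewrite ler_pM2l ?invr_gt0 //.
lra.
Qed.
Definition K1 {R : realType} n : R := 1 / (2 * cc n * (1 + cc n)).
Definition K2 {R : realType} n : R := 1 / (1 + cc n).
Definition phi {R : realType} n : R := (pi / n%:R) *+ 2.
Definition Fpp {R : realType} n : vec3 R := mk3 (K1 n / rn R n) 0 (K1 n * cc n).
Definition Fpm {R : realType} n : vec3 R :=
  mk3 (K1 n * cos (phi n) / rn R n) (K1 n * sin (phi n) / rn R n) (K1 n * cc n).
Definition Fmm {R : realType} n : vec3 R :=
  mk3 (- (K2 n * cc n / rn R n)) (- (K2 n * sin (pi / n%:R) / rn R n)) (K2 n * cc n).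

Lemma mk3D {R : realType} (a b c d e f : R) :
  mk3 a b c + mk3 d e f = mk3 (a + d) (b + e) (c + f).
Proof.
apply/rowP => i; rewrite !mxE.
by case: i => [[|[|[|i]]] hi].
Qed.

Lemma sumF {R : realType} n : (5 <= n)%N -> Fpp n + Fpm n + Fmm n = unit_eff R.
Proof.
move=> h5.
have c0 := @cc_pos R n h5; have r0 := @rn_pos R n h5.
have cne : (cc n : R) != 0 by rewrite gt_eqF.
have rne : (rn R n) != 0 by rewrite gt_eqF.
have c1 : (1 + cc n : R) != 0 by rewrite gt_eqF // addr_gt0.
rewrite /Fpp /Fpm /Fmm /unit_eff !mk3D /phi cos_mulr2n sin_mulr2n -/(cc n).
rewrite /K1 /K2; congr mk3; rewrite ?mulr2n; field.
- by rewrite rne cne c1.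
- by rewrite rne cne c1.
- by rewrite cne c1.
Qed.

Definition thj {R : realType} {n} (j : 'I_n) : R := 2 * (j.+1)%:R * pi / n%:R.

Lemma ev_Fpp {R : realType} n (j : 'I_n) : (5 <= n)%N ->
  ev (Fpp n) (vertex R j) = K1 n * (cos (thj j) + cc n).
Proof.
move=> h5; have r0 := @rn_pos R n h5.
have rne : (rn R n) != 0 by rewrite gt_eqF.
rewrite /Fpp /vertex evE /thj; field; exact: rne.
Qed.

Lemma ev_Fpm {R : realType} n (j : 'I_n) : (5 <= n)%N ->
  ev (Fpm n) (vertex R j) = K1 n * (cos (thj j - phi n) + cc n).
Proof.
move=> h5; have r0 := @rn_pos R n h5.
have rne : (rn R n) != 0 by rewrite gt_eqF.
rewrite /Fpm /vertex evE /thj cosB; field; exact: rne.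
Qed.

Lemma ev_Fmm {R : realType} n (j : 'I_n) : (5 <= n)%N ->
  ev (Fmm n) (vertex R j) = K2 n * (cc n - cos (thj j - pi / n%:R)).
Proof.
move=> h5; have r0 := @rn_pos R n h5.
have rne : (rn R n) != 0 by rewrite gt_eqF.
rewrite /Fmm /vertex evE /thj cosB -/(cc n); field; exact: rne.
Qed.
Lemma eff_of_vertices {R : realType} n (e : vec3 R) :
  (forall j : 'I_n, 0 <= ev e (vertex R j) <= 1) -> effect n e.
Proof. by move=> H s Hs; apply: (state_conv e 0 1 s Hs H). Qed.

Lemma K1E {R : realType} n : (5 <= n)%N -> K1 n * (1 + cc n) = (1 / cc n) / 2 :> R.
Proof.
move=> h5; have c0 := @cc_pos R n h5.
have cne : (cc n : R) != 0 by rewrite gt_eqF.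
have c1 : (1 + cc n : R) != 0 by rewrite gt_eqF // addr_gt0.
rewrite /K1; field; by rewrite cne c1.
Qed.

Lemma K2E {R : realType} n : (5 <= n)%N -> K2 n * (1 + cc n) = 1 :> R.
Proof.
move=> h5; have c0 := @cc_pos R n h5.
have c1 : (1 + cc n : R) != 0 by rewrite gt_eqF // addr_gt0.
rewrite /K2; field; exact: c1.
Qed.

Lemma K1_pos {R : realType} n : (5 <= n)%N -> 0 < K1 n :> R.
Proof.
move=> h5; have c0 := @cc_pos R n h5.
by rewrite /K1 divr_gt0 // mulr_gt0 // ?mulr_gt0 // addr_gt0.
Qed.

Lemma K2_pos {R : realType} n : (5 <= n)%N -> 0 < K2 n :> R.
Proof.
move=> h5; have c0 := @cc_pos R n h5.
by rewrite /K2 divr_gt0 // addr_gt0.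
Qed.

Lemma invc_le2 {R : realType} n : (5 <= n)%N -> 1 / cc n <= 2 :> R.
Proof.
move=> h5; have c0 := @cc_pos R n h5; have ch := @cc_half R n h5.
by rewrite ler_pdivrMr //; lra.
Qed.

Lemma b_pp {R : realType} n (j : 'I_n) : (5 <= n)%N -> odd n ->
  0 <= ev (Fpp n) (vertex R j) <= 1.
Proof.
move=> h5 on; have n0 : (0 < n)%N by apply: leq_trans h5.
rewrite ev_Fpp //.
have V := @V1 R n j.+1 n0 on (ltn_ord j).
have C1 := cos_le1 (thj j : R).
have k0 := @K1_pos R n h5; have kE := @K1E R n h5; have i2 := @invc_le2 R n h5.
rewrite /thj in C1 *.
apply/andP; split; first nra.
nra.
Qed.

Lemma thj_phi {R : realType} n (j : 'I_n) : (0 < n)%N ->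
  thj j - phi n = 2 * j%:R * pi / n%:R :> R.
Proof.
move=> n0; have nR : (n%:R : R) != 0 by rewrite pnatr_eq0 -lt0n.
rewrite /thj /phi -natr1 mulr2n; field; exact: nR.
Qed.

Lemma b_pm {R : realType} n (j : 'I_n) : (5 <= n)%N -> odd n ->
  0 <= ev (Fpm n) (vertex R j) <= 1.
Proof.
move=> h5 on; have n0 : (0 < n)%N by apply: leq_trans h5.
rewrite ev_Fpm // thj_phi //.
have V := @V1 R n j n0 on (ltnW (ltn_ord j)).
have C1 := cos_le1 (2 * j%:R * pi / n%:R : R).
have k0 := @K1_pos R n h5; have kE := @K1E R n h5; have i2 := @invc_le2 R n h5.
apply/andP; split; first nra.
nra.
Qed.

Lemma b_mm {R : realType} n (j : 'I_n) : (5 <= n)%N ->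
  0 <= ev (Fmm n) (vertex R j) <= 1.
Proof.
move=> h5; have n0 : (0 < n)%N by apply: leq_trans h5.
rewrite ev_Fmm //.
have V := @V2 R n j n0 (ltn_ord j).
have C1 := cos_geN1 (thj j - pi / n%:R : R).
have k0 := @K2_pos R n h5; have kE := @K2E R n h5.
rewrite /thj in C1 *.
apply/andP; split; first nra.
nra.
Qed.

Lemma b_sum {R : realType} n (j : 'I_n) : (5 <= n)%N ->
  ev (Fpp n) (vertex R j) + ev (Fpm n) (vertex R j) + ev (Fmm n) (vertex R j) = 1.
Proof. by move=> h5; rewrite -!evDl sumF // ev_unit_vertex. Qed.
Definition Jc {R : realType} n (x y : bool) : vec3 R :=
  if x then (if y then Fpp n else Fpm n) else (if y then 0 else Fmm n).
Definition M1c {R : realType} n (x : bool) : vec3 R := Jc n x true + Jc n x false.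
Definition M2c {R : realType} n (y : bool) : vec3 R := Jc n true y + Jc n false y.

Lemma Jc_eff {R : realType} n x y : (5 <= n)%N -> odd n -> effect n (@Jc R n x y).
Proof.
move=> h5 on; apply: eff_of_vertices => j.
case: x; case: y => /=.
- exact: b_pp.
- exact: b_pm.
- by rewrite ev0l lexx ler01.
- exact: b_mm.
Qed.

Lemma constr {R : realType} n : (5 <= n)%N -> odd n ->
  [/\ dichotomic n (@M1c R n), dichotomic n (@M2c R n) & compatible n (@M1c R n) (@M2c R n)].
Proof.
move=> h5 on; split.
- split.
    case=> /=; apply: eff_of_vertices => j; rewrite /M1c /Jc /= evDl;
    have := @b_pp R n j h5 on; have := @b_pm R n j h5 on; have := @b_mm R n j h5;
    have := @b_sum R n j h5; rewrite ?ev0l; lra.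
  by rewrite /M1c /Jc /= add0r sumF.
- split.
    case=> /=; apply: eff_of_vertices => j; rewrite /M2c /Jc /= evDl;
    have := @b_pp R n j h5 on; have := @b_pm R n j h5 on; have := @b_mm R n j h5;
    have := @b_sum R n j h5; rewrite ?ev0l; lra.
  by rewrite /M2c /Jc /= addr0 addrA sumF.
- exists (Jc n); split; first by move=> x y; apply: Jc_eff.
  by split => x; rewrite big_bool.
Qed.

Lemma fnorm_ge {R : realType} n (f : vec3 R) s : state_space n s ->
  `|ev f s| <= fnorm n f.
Proof.
move=> Hs; apply: ub_le_sup; last by exists s.
exists (\sum_(j < n) `|ev f (vertex R j)|) => _ [t Ht <-].
rewrite ler_norml.
have H : - (\sum_(j < n) `|ev f (vertex R j)|) <= ev f t <= \sum_(j < n) `|ev f (vertex R j)|.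
  apply: (state_conv f _ _ t Ht) => j.
  have : `|ev f (vertex R j)| <= \sum_(j < n) `|ev f (vertex R j)|.
    rewrite (bigD1 j) //= lerDl; apply: sumr_ge0 => k _; exact: normr_ge0.
  by rewrite ler_norml.
exact: H.
Qed.
Lemma fnorm_ge' {R : realType} n (f : vec3 R) (j : 'I_n) : ev f (vertex R j) <= fnorm n f.
Proof. exact: (le_trans (ler_norm _) (fnorm_ge n f _ (vertex_state n j))). Qed.

Lemma lower {R : realType} n : (5 <= n)%N -> odd n ->
  8^-1 * (5 + 1 / cc n) <= Pbar n (@M1c R n) (@M2c R n).
Proof.
move=> h5 on.
have n0 : (0 < n)%N by apply: leq_trans h5.
have nR : (n%:R : R) != 0 by rewrite pnatr_eq0 -lt0n.
have kE1 := @K1E R n h5; have kE2 := @K2E R n h5.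
pose x : R := pi / n%:R.
have hN : (n.-1 < n)%N by rewrite ltn_predL.
pose jN := Ordinal hN.
have tN : thj jN = pi *+ 2 :> R.
  rewrite /thj /= prednK // mulr2n; field; exact: nR.
have cN1 : cos (thj jN) = 1 :> R by rewrite tN cos2pi.
have cN2 : cos (thj jN - pi / n%:R) = cc n :> R.
  by rewrite tN addrC (periodicn (@cosD2pi R) 1) cosN.
pose j0 := Ordinal n0.
have c0 : cos (thj j0 - phi n) = 1 :> R.
  by rewrite thj_phi // /= mulr0 !mul0r cos0.
set h := n./2.
have hn : n = (h.*2).+1 by rewrite -[in LHS](odd_double_half n) on.
have hh : (h < n)%N by rewrite {1}hn -addnn ltnS leq_addr.
pose jh := Ordinal hh.
have nhR : (n%:R : R) = 2 * h%:R + 1 by rewrite {1}hn -natr1 -muln2 natrM mulrC.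
have nhR0 : (2 * h%:R + 1 : R) != 0 by rewrite -nhR.
have th : thj jh = x + pi :> R.
  rewrite /thj /x /= -natr1 nhR; field; exact: nhR0.
have ch1 : cos (thj jh) = - cc n :> R by rewrite th cosDpi.
have ch2 : cos (thj jh - phi n) = - cc n :> R.
  have -> : thj jh - phi n = - x + pi :> R by rewrite th /phi /x mulr2n; ring.
  by rewrite cosDpi cosN.
have ch3 : cos (thj jh - pi / n%:R) = -1 :> R.
  by rewrite th -/x addrC addKr cospi.
rewrite /Pbar !big_bool /=.
have F1 := fnorm_ge' n (@M1c R n true + @M2c R n true) jN.
have F2 := fnorm_ge' n (@M1c R n true + @M2c R n false) j0.
have F3 := fnorm_ge' n (@M1c R n false + @M2c R n true) jh.
have F4 := fnorm_ge' n (@M1c R n false + @M2c R n false) jh.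
move: F1 F2 F3 F4; rewrite /M1c /M2c /Jc /= !evDl !ev0l.
have S1 := @b_sum R n jN h5; have S2 := @b_sum R n j0 h5; have S3 := @b_sum R n jh h5.
move: S1 S2 S3.
rewrite !ev_Fpp // !ev_Fpm // !ev_Fmm // cN1 cN2 c0 ch1 ch2 ch3.
move=> S1 S2 S3 F1 F2 F3 F4.
rewrite ler_pM2l ?invr_gt0 //.

lra.
Qed.

Theorem mainTheorem13 (R : realType) (n : nat) (hn5 : (5 <= n)%N) (hodd : odd n) :
  let v : R := 2^-1 * (1 + (1 + 1 / cos (pi / n%:R)) / 4) in
  ((forall M1 M2 : bool -> vec3 R,
      dichotomic n M1 -> dichotomic n M2 -> compatible n M1 M2 ->
      Pbar n M1 M2 <= v) /\
   (exists M1 M2 : bool -> vec3 R,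
      [/\ dichotomic n M1, dichotomic n M2, compatible n M1 M2 & Pbar n M1 M2 = v])) /\
  3 / 4 < v /\
  (exists M1 M2 : bool -> vec3 R,
      [/\ dichotomic n M1, dichotomic n M2, compatible n M1 M2 & 3 / 4 < Pbar n M1 M2]).
Proof.
move=> v.
have veq : v = 8^-1 * (5 + 1 / cc n).
  rewrite /v /cc. lra.
have c0 := @cc_pos R n hn5; have c1 := @cc_lt1 R n hn5.
have ic : 1 < 1 / cc n :> R by rewrite ltr_pdivlMr // mul1r.
have v34 : 3 / 4 < v by rewrite veq; lra.
have [D1 D2 C] := @constr R n hn5 hodd.
have Peq : Pbar n (@M1c R n) (@M2c R n) = v.
  apply/eqP; rewrite eq_le veq; apply/andP; split.
    exact: upper.
  exact: lower.
split; [split|split].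
- move=> M1 M2 H1 H2 H3; rewrite veq; exact: upper.
- by exists (@M1c R n), (@M2c R n); split.
- exact: v34.
- by exists (@M1c R n), (@M2c R n); split => //; rewrite Peq.
Qed.
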